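(* Let $N=\{1,\dots,n\}$, let $U$ be a finite set, $S_1,\dots,S_n\subseteq U$, $w:U\to\mathbb{R}$, $c\in\mathbb{R}$, and let $s:2^N\to\mathbb{R}$ be defined by $s_A=c+\mathbf{w}(\bigcup_{i\in A}S_i)$, where $\mathbf{w}(S)=\sum_{u\in S}w(u)$. Define the type-3 discrete set Fourier transform of $s$ by $\widehat{s}^{(3)}_B=\sum_{A\subseteq B}(-1)^{|A|}s_A$ for $B\subseteq N$. Then $$\widehat{s}^{(3)}_B=\begin{cases}-\mathbf{w}\big(\bigcap_{i\in B}S_i\big), & B\neq\emptyset,\\ s_\emptyset, & B=\emptyset.\end{cases}$$ *)

(* Defs.v *)
From mathcomp Require Import all_boot all_order all_algebra.
From mathcomp Require Import reals.
Set Implicit Arguments. Unset Strict Implicit. Unset Printing Implicit Defensive.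
Import Order.TTheory GRing.Theory Num.Theory.
Local Open Scope ring_scope.

Definition wset (R : realType) (U : finType) (w : U -> R) (S : {set U}) : R :=
  \sum_(u in S) w u.

Definition cover_fun (R : realType) (U : finType) (n : nat)
  (S : 'I_n -> {set U}) (w : U -> R) (c : R) (A : {set 'I_n}) : R :=
  c + wset w (\bigcup_(i in A) S i).

Definition dsft3 (R : realType) (n : nat) (s : {set 'I_n} -> R)
  (B : {set 'I_n}) : R :=
  \sum_(A : {set 'I_n} | A \subset B) (-1) ^+ #|A| * s A.

(* Main.v *)
Require Import Defs.
From mathcomp Require Import all_boot all_order all_algebra.
From mathcomp Require Import reals.
From mathcomp Require Import lra.
Set Implicit Arguments. Unset Strict Implicit.
Import Order.TTheory GRing.Theory Num.Theory.
Local Open Scope ring_scope.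

Definition tog (T : finType) (x : T) (A : {set T}) :=
  if x \in A then A :\ x else x |: A.

Lemma tog_inv (T : finType) (x : T) : involutive (tog x).
Proof.
move=> A; rewrite /tog; case: (boolP (x \in A)) => xA.
  by rewrite setD11 setD1K.
by rewrite setU11 setU1K.
Qed.

Lemma alt_sum (R : realType) (T : finType) (B : {set T}) :
  \sum_(A : {set T} | A \subset B) (-1) ^+ #|A| = (B == set0)%:R :> R.
Proof.
have [->|[x xB]] := set_0Vmem B.
  under eq_bigl => A do rewrite subset0.
  by rewrite big_pred1_eq cards0 expr0 eqxx.
have /negbTE -> : B != set0 by apply/set0Pn; exists x.
set s := (X in X = _).
suff : s = - s by move=> h; rewrite mulr0n; lra.
rewrite {1}/s (reindex_inj (can_inj (tog_inv x))) /= -sumrN.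
apply: eq_big => A.
  rewrite /tog; case: ifP => xA.
    apply/idP/idP => H; last by apply: subset_trans H; apply: subsetDl.
    by rewrite -(setD1K xA) subUset sub1set xB H.
  by rewrite subUset sub1set xB.
move=> _; rewrite /tog; case: ifP => xA.
  by rewrite (cardsD1 x A) xA add1n exprS mulN1r opprK.
by rewrite cardsU1 xA add1n exprS mulN1r.
Qed.

Lemma inner (R : realType) (U : finType) (n : nat)
  (S : 'I_n -> {set U}) (w : U -> R) (B : {set 'I_n}) (u : U) :
  \sum_(A : {set 'I_n} | A \subset B)
     (if u \in \bigcup_(i in A) S i then (-1) ^+ #|A| * w u else 0)
  = w u * ((B == set0)%:R - (B :&: [set i | u \notin S i] == set0)%:R).
Proof.
rewrite -!(alt_sum R) mulrBr !mulr_sumr.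
have -> : \sum_(A : {set 'I_n} | A \subset B :&: [set i | u \notin S i]) w u * (-1) ^+ #|A|
  = \sum_(A : {set 'I_n} | (A \subset B) && (u \notin \bigcup_(i in A) S i)) w u * (-1) ^+ #|A|.
  apply: eq_bigl => A; rewrite subsetI; congr (_ && _).
  apply/subsetP/negP => [H /bigcupP [i iA uS] | H i iA].
    by move: (H i iA); rewrite inE uS.
  by rewrite inE; apply/negP => uS; apply: H; apply/bigcupP; exists i.
rewrite [in RHS](bigID (fun A : {set 'I_n} => u \in \bigcup_(i in A) S i)) /=.
rewrite addrK big_mkcondr; apply: eq_bigr => A _.
by case: ifP => // _; rewrite mulrC.
Qed.

Theorem theorem2 (R : realType) (U : finType) (n : nat)
  (S : 'I_n -> {set U}) (w : U -> R) (c : R) (B : {set 'I_n}) :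
  dsft3 (cover_fun S w c) B =
  if B != set0 then - wset w (\bigcap_(i in B) S i)
  else cover_fun S w c set0.
Proof.
rewrite /dsft3 /cover_fun /wset /=.
under eq_bigr => A _ do rewrite mulrDr mulr_sumr (big_mkcond (fun u => u \in _)).
rewrite big_split /= -mulr_suml alt_sum.
rewrite (exchange_big_dep predT) //=.
under eq_bigr => u _ do rewrite (eq_bigl _ _ (fun A => andbT _)) (inner S w B u).
have [->|BN] := eqVneq B set0.
  rewrite /= mul1r big_set0 big_set0; congr (_ + _).
  apply: big1 => u _; by rewrite set0I eqxx subrr mulr0.
rewrite /= mul0r add0r -sumrN [RHS]big_mkcond; apply: eq_bigr => u _.
have -> : (B :&: [set i | u \notin S i] == set0) = (u \in \bigcap_(i in B) S i).
  apply/eqP/bigcapP => [H i iB | H].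
    apply/negPn/negP => uS.
    have : i \in B :&: [set i | u \notin S i] by rewrite !inE iB uS.
    by rewrite H inE.
  apply/setP => i; rewrite !inE; apply/negP => /andP [iB /negP []].
  exact: H.
case: (u \in \bigcap_(i in B) S i) => /=; lra.
Qed.
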